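(* With the notation of the context and $\lambda>0$, define for each $x$ $$S_\lambda(x):=\sum_{y=1}^C d(y,\hat y(x))\,\mathbb{I}\{y\in\mathcal{C}_\lambda(x)\},\qquad S_0(x):=\sum_{y=1}^C d(y,\hat y(x))\,\mathbb{I}\{y\in\mathcal{C}(x)\}.$$ Then $S_\lambda(x)\le S_0(x)$ for every $x$, and consequently $\mathbb{E}[S_\lambda(X)]\le\mathbb{E}[S_0(X)]$ for any random input $X$.
   Context: Classification with $C$ classes, labels in $[C]=\{1,\dots,C\}$. A classifier outputs a softmax vector $\hat\pi(x)\in\mathbb{R}^C$ and predicted class $\hat y(x)=\arg\max_i \hat\pi_i(x)$. A map $g:[C]\to[G]$ partitions the classes into $G$ groups. Define $d(y,y'):=\mathbb{I}\{g(y)\neq g(y')\}$. Given any real-valued score function $s(x,y)$ and $\lambda>0$, define the penalized score $s_\lambda(x,y):=s(x,y)+\lambda\, d(y,\hat y(x))$. Given a calibration set $\{(x_i,y_i)\}_{i=1}^n$ and $\alpha\in(0,1)$ with $\lceil (n+1)(1-\alpha)\rceil\le n$, $\hat q$ (resp. $\hat q_\lambda$) is the $\lceil (n+1)(1-\alpha)\rceil$-th smallest value of $\{s(x_i,y_i)\}_{i=1}^n$ (resp. $\{s_\lambda(x_i,y_i)\}_{i=1}^n$). Prediction sets: $\mathcal{C}(x)=\{y: s(x,y)\le\hat q\}$, $\mathcal{C}_\lambda(x)=\{y: s_\lambda(x,y)\le\hat q_\lambda\}$. *)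

(* Defs.v *)
From HB Require Import structures.
From mathcomp Require Import all_boot all_order all_algebra.
From mathcomp Require Import all_classical all_reals all_analysis.
Set Implicit Arguments. Unset Strict Implicit. Unset Printing Implicit Defensive.
Import Order.TTheory GRing.Theory Num.Theory.
Local Open Scope ring_scope.

Section conformal.
Variables (R : realType) (X : Type) (C G : nat).

(* predicted class: an argmax of the softmax vector pihat x over [C] = 'I_C;
   i0 is any class (needed to make the arg max well-defined, C > 0) *)
Definition yhat (i0 : 'I_C) (pihat : X -> 'I_C -> R) (x : X) : 'I_C :=
  [arg max_(i > i0) pihat x i]%O.

Definition dgrp (g : 'I_C -> 'I_G) (y y' : 'I_C) : R := (g y != g y')%:R.

Definition pen_score (i0 : 'I_C) (pihat : X -> 'I_C -> R) (g : 'I_C -> 'I_G)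
  (s : X -> 'I_C -> R) (lam : R) (x : X) (y : 'I_C) : R :=
  s x y + lam * dgrp g y (yhat i0 pihat x).

Definition qrank (n : nat) (alpha : R) : int :=
  Num.ceil ((n.+1)%:R * (1 - alpha)).

(* k-th smallest value (k >= 1) of the calibration scores sc(x_i,y_i), i < n *)
Definition kth_smallest (n : nat) (v : 'I_n -> R) (k : int) : R :=
  nth 0 (sort <=%R [seq v i | i <- enum 'I_n]) (`|k|%N).-1.

Definition qhat (sc : X -> 'I_C -> R) (n : nat) (cal : 'I_n -> X * 'I_C)
  (alpha : R) : R :=
  kth_smallest (fun i => sc (cal i).1 (cal i).2) (qrank n alpha).

Definition predset (sc : X -> 'I_C -> R) (q : R) (x : X) : {set 'I_C} :=
  [set y | sc x y <= q].

Definition Sgrp (i0 : 'I_C) (pihat : X -> 'I_C -> R) (g : 'I_C -> 'I_G)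
  (Cset : X -> {set 'I_C}) (x : X) : R :=
  \sum_(y : 'I_C) dgrp g y (yhat i0 pihat x) * (y \in Cset x)%:R.

End conformal.

(* Main.v *)
Require Import Defs.
From HB Require Import structures.
From mathcomp Require Import all_boot all_order all_algebra.
From mathcomp Require Import all_classical all_reals all_analysis.
Import Order.TTheory GRing.Theory Num.Theory.
Local Open Scope ring_scope.

Lemma nth_sorted_le (R : realType) (s : seq R) (k : nat) (t : R) :
  sorted <=%R s -> (k < size s)%N -> (k < count (fun x : R => (x <= t)%R) s)%N ->
  nth 0 s k <= t.
Proof.
move=> ss ks kc; rewrite leNgt; apply/negP => tk.
move: kc; rewrite -(cat_take_drop k s) count_cat.
have -> : count (fun x : R => (x <= t)%R) (drop k s) = 0%N.
  apply/eqP; rewrite -leqn0 leqNgt -has_count; apply/negP => /hasP [x xd xt].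
  have sd : sorted <=%R (drop k s).
    by move: ss; rewrite -{1}(cat_take_drop k s) => /cat_sorted2[].
  move: sd xd; rewrite (drop_nth 0 ks) /= => sd.
  rewrite in_cons => /orP [/eqP xe | xin]; first by move: xt; rewrite xe leNgt tk.
  have /allP /(_ x xin) := order_path_min (@le_trans _ R) sd.
  move=> kx; move: xt; rewrite leNgt (lt_le_trans tk kx) //.
rewrite addn0 => /leq_trans /(_ (count_size _ _)); rewrite size_take ks ltnn //.
Qed.

Lemma count_le_nth (R : realType) (s : seq R) (k : nat) :
  sorted <=%R s -> (k < size s)%N ->
  (k < count (fun x : R => (x <= nth 0 s k)%R) s)%N.
Proof.
move=> ss ks; rewrite -{2}(cat_take_drop k.+1 s) count_cat.
apply: (@leq_trans (count (fun x : R => (x <= nth 0 s k)%R) (take k.+1 s))); last exact: leq_addr.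
have : all (fun x : R => (x <= nth 0 s k)%R) (take k.+1 s).
  apply/(all_nthP 0) => i; rewrite (size_takel ks) => ik.
  rewrite nth_take //; apply: (le_sorted_leq_nth 0 ss) => //.
    by rewrite inE (leq_trans ik).
by rewrite all_count => /eqP ->; rewrite (size_takel ks).
Qed.

Lemma kth_le (R : realType) (n : nat) (u w : 'I_n -> R) (k : int) (c : R) :
  0 < k -> k <= n%:Z -> (forall i, u i <= w i + c) ->
  kth_smallest u k <= kth_smallest w k + c.
Proof.
case: k => [k|k] //; rewrite ltz_nat lez_nat => k0 kn uw.
rewrite /kth_smallest /=.
set su := sort _ _; set sw := sort _ _.
have szu : size su = n by rewrite size_sort size_map size_enum_ord.
have szw : size sw = n by rewrite size_sort size_map size_enum_ord.
have jn : (k.-1 < n)%N by rewrite prednK.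
have sortu : sorted <=%R su by apply: sort_sorted; exact: le_total.
have sortw : sorted <=%R sw by apply: sort_sorted; exact: le_total.
apply: nth_sorted_le => //; first by rewrite szu.
have := @count_le_nth R _ _ sortw (leq_trans jn (eq_leq (esym szw))).
move/leq_trans; apply.
rewrite /su /sw !(permP (permEl (perm_sort _ _))) !count_map.
apply: sub_count => i /=; rewrite /preim /= => h.
by apply: le_trans (uw i) _; rewrite lerD2r.
Qed.

Theorem mainTheorem3 (R : realType) (d : measure_display) (T : measurableType d)
  (C G : nat) (hC : (0 < C)%N)
  (pihat : T -> 'I_C -> R) (g : 'I_C -> 'I_G) (s : T -> 'I_C -> R)
  (lam : R) (hlam : 0 < lam)
  (n : nat) (cal : 'I_n -> T * 'I_C) (alpha : R)
  (halpha : 0 < alpha < 1) (hk : qrank n alpha <= n%:Z)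
  (P : probability T R) :
  let i0 := Ordinal hC in
  let sl := pen_score i0 pihat g s lam in
  let Sl := Sgrp i0 pihat g (predset sl (qhat sl cal alpha)) in
  let S0 := Sgrp i0 pihat g (predset s (qhat s cal alpha)) in
  (forall x, Sl x <= S0 x) /\
  (\int[P]_x (Sl x)%:E <= \int[P]_x (S0 x)%:E)%E.
Proof.
move=> i0 sl Sl S0.
have k0 : 0 < qrank n alpha.
  rewrite /qrank ceil_gt0 mulr_gt0 // ?ltr0n // subr_gt0.
  by case/andP: halpha.
have hq : qhat sl cal alpha <= qhat s cal alpha + lam.
  apply: kth_le => // i; rewrite /sl /pen_score lerD2l /dgrp.
  by case: (_ != _); rewrite ?mulr1 ?mulr0 // ltW.
have pt : forall x, Sl x <= S0 x.
  move=> x; rewrite /Sl /S0 /Sgrp; apply: ler_sum => y _.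
  rewrite /dgrp; case E: (g y != _); rewrite ?mul0r // !mul1r ler_nat.
  rewrite /predset !inE /sl /pen_score /dgrp E mulr1.
  case: (boolP (s x y + lam <= _)) => [h|]; last by case: (_ <= _)%R.
  have -> // : (s x y <= qhat s cal alpha)%R.
  by rewrite -(lerD2r lam); apply: le_trans h hq.
have Sge0 : forall (Cs : T -> {set 'I_C}) x, 0 <= Sgrp i0 pihat g Cs x.
  by move=> Cs x; apply: sumr_ge0 => y _; rewrite mulr_ge0 // /dgrp ler0n.
split => //.
rewrite !ge0_integralTE //; last 2 first.
- by move=> x; rewrite lee_fin Sge0.
- by move=> x; rewrite lee_fin Sge0.
apply: ereal_sup_le => _ [h hf <-]; exists h => //= x.
by apply: (le_trans (hf x)); rewrite lee_fin pt.
Qed.
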